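(* Let $r(\mathcal{C},R)$ be a reachability rule and $\mathrm{H}$ a set of Horn rules. Then $r(\mathcal{C},R)\oplus\mathbf{G}(\mathrm{H})$ and $\mathrm{H}$ are permutable (each permutes above the other).
   Context: Fix a countably infinite set $\mathtt{S}$ of sequents (atomic labels), a set $\mathcal{U}$ of vertices, and a non-empty finite set $\mathtt{E}$ of edge types. A g-sequent is $\mathcal{G}=(\mathcal{V},\mathcal{E},\mathcal{L})$ with $\mathcal{V}\subseteq\mathcal{U}$, $\mathcal{E}=\{\mathcal{E}_a\mid a\in\mathtt{E}\}$, $\mathcal{E}_a\subseteq\mathcal{V}\times\mathcal{V}$, $\mathcal{L}:\mathcal{V}\to\mathtt{S}$; $\mathcal U(\mathcal G):=\mathcal V$. It is written $\Gamma\vdash\Delta$ with $\Gamma$ the set of edge atoms $w\mathcal{E}_a u$ ($(w,u)\in\mathcal{E}_a$) and $\Delta$ the set of prefixed sequents $w:S$ ($\mathcal{L}(w)=S$); $\mathtt{PS}=\mathcal{U}\times\mathtt{S}$; commas denote disjoint union. Let $\overline{\mathtt E}=\{\bar a\mid a\in\mathtt E\}$, $\bar{\bar z}=z$, and for a string $s=x_1\cdots x_n$ over $\mathtt E\cup\overline{\mathtt E}$ let $\bar s=\bar x_n\cdots\bar x_1$; $\varepsilon$ is the empty string. Paths: $\mathcal{G}\models u\xrightarrow{a}w$ iff $(u,w)\in\mathcal{E}_a$; $\mathcal{G}\models u\xrightarrow{\bar a}w$ iff $(w,u)\in\mathcal{E}_a$; $\mathcal G\models u\xrightarrow{\varepsilon}w$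 iff $u=w$; $\mathcal{G}\models u\xrightarrow{xs}w$ iff some $v\in\mathcal V$ has $u\xrightarrow{x}v$ and $v\xrightarrow{s}w$; for a set $\mathscr L$ of strings, $u\xrightarrow{\mathscr L}w$ iff $u\xrightarrow{s}w$ for some $s\in\mathscr L$. An $\mathtt{E}$-system is a finite set $\mathbf{G}$ of production rules $x\longrightarrow t$ with $x\in\mathtt{E}\cup\overline{\mathtt{E}}$ and $t$ a string, such that $x\longrightarrow t\in\mathbf{G}$ iff $\bar x\longrightarrow\bar t\in\mathbf{G}$. $t\longrightarrow_{\mathbf{G}}t'$ iff $t'$ arises from $t$ by replacing one occurrence of the left side of a rule of $\mathbf G$ by its right side; $\longrightarrow^*_{\mathbf G}$ is its reflexive-transitive closure, and $\mathbf{G}(s)=\{t\mid s\longrightarrow^*_{\mathbf{G}}t\}$. A sequent constraint is a relation $R\subseteq\mathtt{S}^n\times 2^{\mathtt{PS}}$; $S_1,\dots,S_n,\Delta$ satisfy $R$ iff $(S_{\pi(1)},\dots,S_{\pi(n)},\Delta)\in R$ for some permutation $\pi$. A reachability rule $r(\mathcal C,R)$ has premises $\Gamma\vdash\Delta,w:S_i,u:S'_i$ ($i\in[n]$) and conclusion $\Gamma\vdash\Delta,w:S,u:S'$, where $\mathcal{C}=(C_1,\dots,C_n)$, each $C_i$ is a one-edge tree $(\{w,u\},\{(w,u)\},L_i)$ with $L_i(w,u)=\mathbf{G}_i(a_i)$ for some $a_i\in\mathtt E$ and $\mathtt E$-system $\mathbf G_i$, the $i$-th premise satisfies $\mathcal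 G\models w\xrightarrow{\mathbf G_i(a_i)}u$, and $S_1,S'_1,\dots,S_n,S'_n,S,S',\Delta$ satisfy $R$. For a string $s=x_1\cdots x_n$, $w\mathcal{E}_s u$ abbreviates edge atoms $w\mathcal{E}_{x_1}v_1,\dots,v_{n-1}\mathcal{E}_{x_n}u$, where $v\mathcal E_{\bar a}z$ means $z\mathcal E_a v$ and $w\mathcal E_\varepsilon u$ means $w=u$. A forward Horn rule $h_f$ (for $a\in\mathtt E$, string $s$) has premise $\Gamma,w\mathcal{E}_s u,w\mathcal{E}_a u\vdash\Delta$ and conclusion $\Gamma,w\mathcal{E}_s u\vdash\Delta$; a backward Horn rule $h_b$ is the same with $w\mathcal{E}_a u$ replaced by $u\mathcal{E}_a w$. Their grammars are $\mathbf{G}(h_f)=\{a\longrightarrow s,\bar a\longrightarrow\bar s\}$ and $\mathbf{G}(h_b)=\{\bar a\longrightarrow s,a\longrightarrow\bar s\}$; for a set $\mathrm H$ of Horn rules $\mathbf G(\mathrm H)$ is the union of their grammars. Absorb: $r(\mathcal C,R)\oplus\mathbf G$ is the reachability rule $r(\mathcal C',R)$ where each label $\mathbf G_i(a_i)$ of $\mathcal C$ is replaced by $(\mathbf G_i\cup\mathbf G)(a_i)$. Permutation: $\mathrm{R}_1$ permutes above $\mathrm{R}_2$ iff whenever $\mathcal{G}$ is obtained from $\mathcal{G}_1,\dots,\mathcal{G}_n$ by an application of some $\sigma\in\mathrm{R}_2$ followed by an application of some $\rho\in\mathrm{R}_1$, then $\mathcal{G}$ can be obtained from $\mathcal{G}_1,\dots,\mathcal{G}_n$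 by applications of $\rho$ followed by an application of $\sigma$; permutable means each permutes above the other. *)

(* Defs.v *)
From Stdlib Require Import List Permutation Relation_Operators.
Import ListNotations.
Set Implicit Arguments.

Section GSeq.
Variables (U S E : Type).

Inductive letter := Fw (a : E) | Bw (a : E).

Definition bar (x : letter) : letter :=
  match x with Fw a => Bw a | Bw a => Fw a end.

Definition barstr (s : list letter) : list letter := rev (map bar s).

(* a finite set of production rules x --> t *)
Definition esys := list (letter * list letter).

Definition is_esys (G : esys) : Prop :=
  forall x t, In (x, t) G <-> In (bar x, barstr t) G.

Definition gstep (G : esys) (t t' : list letter) : Prop :=
  exists l1 l2 x r, In (x, r) G /\ t = l1 ++ x :: l2 /\ t' = l1 ++ r ++ l2.

Definition lang (G : esys) (s : list letter) : list letter -> Prop :=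
  fun t => clos_refl_trans _ (gstep G) s t.

(* A g-sequent Γ ⊢ Δ: gE a w u means the edge atom w E_a u is in Γ,
   gL w S means the prefixed sequent w:S is in Δ.  The vertex set is the
   domain of the labelling. *)
Record gseq := mkG { gE : E -> U -> U -> Prop ; gL : U -> S -> Prop }.

Definition gV (G : gseq) (w : U) : Prop := exists T, gL G w T.

Definition wf (G : gseq) : Prop :=
  (forall w T1 T2, gL G w T1 -> gL G w T2 -> T1 = T2) /\
  (forall a w u, gE G a w u -> gV G w /\ gV G u).

Definition step1 (G : gseq) (u : U) (x : letter) (v : U) : Prop :=
  match x with Fw a => gE G a u v | Bw a => gE G a v u end.

Fixpoint gpath (G : gseq) (u : U) (s : list letter) (w : U) : Prop :=
  match s with
  | [] => u = w
  | x :: s' => exists v, gV G v /\ step1 G u x v /\ gpath G v s' w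
  end.

Definition reachL (G : gseq) (u : U) (L : list letter -> Prop) (w : U) : Prop :=
  exists s, L s /\ gpath G u s w.

Definition rule := list gseq -> gseq -> Prop.

(* the sequence C = (C_1..C_n) is given by the pairs (a_i, G_i): C_i is the
   one-edge tree w --> u labelled G_i(a_i) *)
Record rrule := mkR {
  rC : list (E * esys);
  rR : list S -> (U -> S -> Prop) -> Prop }.

Definition valid_rrule (r : rrule) : Prop :=
  Forall (fun p => is_esys (snd p)) (rC r).

Definition sat (R : list S -> (U -> S -> Prop) -> Prop)
  (l : list S) (D : U -> S -> Prop) : Prop :=
  exists l', Permutation l l' /\ R l' D.

Definition ext2 (D : U -> S -> Prop) (w : U) (T : S) (u : U) (T' : S) :
  U -> S -> Prop :=
  fun x X => D x X \/ (x = w /\ X = T) \/ (x = u /\ X = T').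

Definition disj2 (D : U -> S -> Prop) (w : U) (T : S) (u : U) (T' : S) : Prop :=
  ~ D w T /\ ~ D u T' /\ ~ (w = u /\ T = T').

Definition rr_app (r : rrule) : rule := fun ps c =>
  exists (Gam : E -> U -> U -> Prop) (D : U -> S -> Prop) (w u : U) (T T' : S)
         (prem : list (S * S)),
    length prem = length (rC r) /\
    length ps = length prem /\
    wf c /\
    disj2 D w T u T' /\
    (forall a x y, gE c a x y <-> Gam a x y) /\
    (forall x X, gL c x X <-> ext2 D w T u T' x X) /\
    (forall i p Ti Ti' a Gi,
        nth_error ps i = Some p -> nth_error prem i = Some (Ti, Ti') ->
        nth_error (rC r) i = Some (a, Gi) ->
        wf p /\ disj2 D w Ti u Ti' /\
        (forall b x y, gE p b x y <-> Gam b x y) /\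
        (forall x X, gL p x X <-> ext2 D w Ti u Ti' x X) /\
        reachL p w (lang Gi [Fw a]) u) /\
    sat (rR r) (flat_map (fun q => [fst q; snd q]) prem ++ [T; T']) D.

Definition absorb (r : rrule) (G : esys) : rrule :=
  mkR (map (fun p => (fst p, snd p ++ G)) (rC r)) (rR r).

Inductive hkind := Forward | Backward.
Record horn := mkH { hk : hkind ; ha : E ; hs : list letter }.

Definition atom (x : letter) (w v : U) : E * U * U :=
  match x with Fw a => (a, w, v) | Bw a => (a, v, w) end.

(* A is the list of edge atoms abbreviated by  w E_s u  (for some choice of
   intermediate vertices) *)
Fixpoint patoms (w : U) (s : list letter) (u : U) (A : list (E * U * U)) : Prop :=
  match s with
  | [] => w = u /\ A = []
  | x :: s' => exists v A', A = atom x w v :: A' /\ patoms v s' u A'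
  end.

Definition horn_app (h : horn) : rule := fun ps c =>
  exists p, ps = [p] /\ wf p /\ wf c /\
  exists (Gam : E -> U -> U -> Prop) (w u : U) (A : list (E * U * U)),
    let e := match hk h with Forward => (ha h, w, u) | Backward => (ha h, u, w) end in
    patoms w (hs h) u A /\
    (forall b x y, In (b, x, y) A -> ~ Gam b x y) /\
    ~ Gam (fst (fst e)) (snd (fst e)) (snd e) /\ ~ In e A /\
    (forall b x y, gE p b x y <-> Gam b x y \/ In (b, x, y) A \/ (b, x, y) = e) /\
    (forall b x y, gE c b x y <-> Gam b x y \/ In (b, x, y) A) /\
    (forall x X, gL p x X <-> gL c x X).

Definition horn_grammar (h : horn) : esys :=
  match hk h with
  | Forward => [(Fw (ha h), hs h); (Bw (ha h), barstr (hs h))]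
  | Backward => [(Bw (ha h), hs h); (Fw (ha h), barstr (hs h))]
  end.

Definition grammarH (H : list horn) : esys := flat_map horn_grammar H.

(* R1 permutes above R2: if G is obtained from G_1..G_n by an application of
   σ ∈ R2 (conclusion C) followed by an application of ρ ∈ R1 (whose premises
   are C), then G is obtained from G_1..G_n by applications of ρ (one on each
   G_i, giving C_i) followed by an application of σ to C_1..C_n. *)
Definition permutes_above (R1 R2 : rule -> Prop) : Prop :=
  forall (sigma rho : rule), R2 sigma -> R1 rho ->
  forall (Gs : list gseq) (C G : gseq) (ps : list gseq),
    sigma Gs C -> ps <> [] -> Forall (eq C) ps -> rho ps G ->
    exists Cs : list gseq,
      Forall2 (fun Gi Ci => exists qs, qs <> [] /\ Forall (eq Gi) qs /\ rho qs Ci) Gs Cs /\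
      sigma Cs G.

Definition permutable (R1 R2 : rule -> Prop) : Prop :=
  permutes_above R1 R2 /\ permutes_above R2 R1.

Definition horn_rules (H : list horn) : rule -> Prop :=
  fun rho => exists h, In h H /\ rho = horn_app h.

Definition single_rule (r : rule) : rule -> Prop := fun rho => rho = r.

End GSeq.

(* Main.v *)
Require Import Defs.
From Stdlib Require Import List Permutation Relation_Operators Lia.
Import ListNotations.

Section Aux.
Variables (U S E : Type).

Definition edgesV (G : gseq U S E) : Prop :=
  forall a x y, gE G a x y -> gV G x /\ gV G y.

Lemma L_mono (G1 G2 : gseq U S E) :
  (forall x, gV G1 x -> gV G2 x) -> (forall b x y, gE G1 b x y -> gE G2 b x y) ->
  forall s x y, gpath G1 x s y -> gpath G2 x s y.
Proof.
  intros HV HE s; induction s as [|l s IH]; simpl; intros x y H; auto.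
  destruct H as [v [Hv [Hs Hp]]]. exists v; split; [auto|split; [|auto]].
  destruct l; simpl in *; auto.
Qed.

Lemma L_app (G : gseq U S E) s1 s2 x y z :
  gpath G x s1 y -> gpath G y s2 z -> gpath G x (s1 ++ s2) z.
Proof.
  revert x; induction s1 as [|l s IH]; simpl; intros x H1 H2.
  - subst; auto.
  - destruct H1 as [v [Hv [Hs Hp]]]. exists v; eauto.
Qed.

Lemma L_rev (G : gseq U S E) : edgesV G ->
  forall s x y, gpath G x s y -> gpath G y (barstr s) x.
Proof.
  intros HV s; induction s as [|l s IH]; simpl; intros x y H.
  - subst; reflexivity.
  - destruct H as [v [Hv [Hs Hp]]]. unfold barstr; simpl.
    apply L_app with v; [apply IH; auto|].
    simpl. exists x. split; [|split; [|reflexivity]].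
    + destruct l; simpl in Hs; apply HV in Hs; tauto.
    + destruct l; simpl in *; auto.
Qed.

Lemma L_patoms (G : gseq U S E) : edgesV G ->
  forall s w u A, patoms w s u A -> (forall b x y, In (b, x, y) A -> gE G b x y) ->
  gpath G w s u.
Proof.
  intros HV s; induction s as [|l s IH]; simpl; intros w u A HP HA.
  - tauto.
  - destruct HP as [v [A' [-> HP]]].
    assert (Hs : step1 G w l v).
    { destruct l; simpl in *; apply HA; left; reflexivity. }
    exists v. split; [|split; [auto|]].
    + destruct l; simpl in Hs; apply HV in Hs; tauto.
    + apply IH with A'; auto. intros; apply HA; right; auto.
Qed.

Lemma L_rt_cons (G : esys E) t t' x :
  clos_refl_trans _ (gstep G) t t' -> clos_refl_trans _ (gstep G) (x :: t) (x :: t').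
Proof.
  induction 1.
  - apply rt_step. destruct H as [l1 [l2 [y0 [r [Hin [-> ->]]]]]].
    exists (x :: l1), l2, y0, r. simpl; auto.
  - apply rt_refl.
  - eapply rt_trans; eauto.
Qed.

Lemma L_replace (Gp Cq : gseq U S E) (Gr : esys E) (k : hkind) (a : E)
  (s : list (letter E)) (w u : U) (A : list (E * U * U)) :
  edgesV Cq -> (forall x, gV Gp x -> gV Cq x) ->
  (forall b x y, gE Gp b x y -> gE Cq b x y \/
     (b, x, y) = match k with Forward => (a, w, u) | Backward => (a, u, w) end) ->
  (forall b x y, In (b, x, y) A -> gE Cq b x y) ->
  patoms w s u A ->
  incl (horn_grammar (mkH k a s)) Gr ->
  forall t v z, gpath Gp v t z ->
  exists t', clos_refl_trans _ (gstep Gr) t t' /\ gpath Cq v t' z.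
Proof.
  intros HCV HV HE HA HP Hinc t; induction t as [|l t IH]; simpl; intros v z H.
  - exists []; split; [apply rt_refl|exact H].
  - destruct H as [v1 [Hv1 [Hs Hp]]].
    destruct (IH _ _ Hp) as [t'' [Hrt Hp'']].
    assert (Hpath : gpath Cq w s u) by (eapply L_patoms; eauto).
    assert (Hrev : gpath Cq u (barstr s) w) by (apply L_rev; auto).
    assert (Hstep : forall r, In (l, r) Gr -> gpath Cq v r v1 ->
       exists t', clos_refl_trans _ (gstep Gr) (l :: t) t' /\ gpath Cq v t' z).
    { intros r Hin Hr. exists (r ++ t''). split.
      - eapply rt_trans; [apply L_rt_cons; exact Hrt|].
        apply rt_step. exists [], t'', l, r. simpl; auto.
      - eapply L_app; eauto. }
    destruct l as [b|b]; simpl in Hs; apply HE in Hs; destruct Hs as [Hs|Hs].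
    + exists (Fw b :: t''); split; [apply L_rt_cons; auto|].
      exists v1; simpl; auto.
    + destruct k; injection Hs; intros; subst.
      * apply (Hstep s); auto. apply Hinc; simpl; auto.
      * apply (Hstep (barstr s)); auto. apply Hinc; simpl; auto.
    + exists (Bw b :: t''); split; [apply L_rt_cons; auto|].
      exists v1; simpl; auto.
    + destruct k; injection Hs; intros; subst.
      * apply (Hstep (barstr s)); auto. apply Hinc; simpl; auto.
      * apply (Hstep s); auto. apply Hinc; simpl; auto.
Qed.

Lemma L_vert (D : U -> S -> Prop) w u T T' T2 T2' x :
  (exists X, ext2 D w T u T' x X) -> exists X, ext2 D w T2 u T2' x X.
Proof.
  unfold ext2; intros [X [H|[[-> ->]|[-> ->]]]]; eauto.
Qed.

Lemma L_forall2_map (A B : Type) (R : A -> B -> Prop) (f : A -> B) l :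
  (forall x, In x l -> R x (f x)) -> Forall2 R l (map f l).
Proof.
  induction l; simpl; intros; constructor; auto.
Qed.

Lemma L_nth_repeat (A : Type) (p q : A) n i :
  nth_error (repeat p n) i = Some q -> q = p.
Proof.
  intro H. apply nth_error_In in H. apply repeat_spec in H. auto.
Qed.

Lemma L_optmap (A B : Type) (g : A -> B) o y :
  option_map g o = Some y -> exists x, o = Some x /\ y = g x.
Proof. destruct o; simpl; intro H; inversion H; eauto. Qed.

End Aux.

Theorem mainTheorem3 (U S E : Type)
  (HS : exists f : nat -> S, (forall m n, f m = f n -> m = n) /\ (forall T, exists n, f n = T))
  (HE : exists l : list E, l <> [] /\ forall a, In a l)
  (r : rrule U S E) (Hr : valid_rrule r) (H : list (horn E)) :
  permutable (single_rule (rr_app (absorb r (grammarH H)))) (@horn_rules U S E H).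
Proof.
  split.
  - intros sigma rho [h [Hh ->]] -> Gs C G ps Hsig Hps Hall Hrho.
    destruct h as [k ha0 s0].
    destruct Hsig as [p [-> [wfp [wfC [Gam [w [u [A Hh']]]]]]]].
    cbv zeta in Hh'; simpl in Hh'.
    destruct Hh' as [Hpat [HA [He [HeA [HpE [HcE HL]]]]]].
    destruct Hrho as [Gam2 [D [w2 [u2 [T [T' [prem [Hl1 [Hl2 [wfG [Hdisj [HGE [HGL [Hprem Hsat]]]]]]]]]]]]]].
    destruct ps as [|C0 ps']; [congruence|].
    assert (C0 = C) by (inversion Hall; auto). subst C0.
    destruct prem as [|[T0 T0'] prem']; simpl in Hl2; [discriminate|].
    destruct (nth_error (rC (absorb r (grammarH H))) 0) as [[a0 G0]|] eqn:Hn0;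
      [|apply nth_error_None in Hn0; rewrite <- Hl1 in Hn0; simpl in Hn0; lia].
    destruct (Hprem 0 C T0 T0' a0 G0 eq_refl eq_refl Hn0)
      as [_ [_ [HCE0 [HCL0 _]]]].
    set (e := match k with Forward => (ha0, w, u) | Backward => (ha0, u, w) end) in *.
    set (G' := @mkG U S E (fun b x y => gE G b x y \/ (b, x, y) = e) (gL G)).
    assert (HVpG : forall z0, gV p z0 -> gV G z0).
    { intros z0 [X HX]. apply HL, HCL0 in HX.
      destruct (@L_vert _ _ _ _ _ _ _ T T' _ (ex_intro _ X HX)) as [Y HY]. exists Y. apply HGL; auto. }
    assert (wfG' : wf G').
    { split; [apply wfG|]. intros b x y [Hb|Hb]; [apply wfG in Hb; exact Hb|].
      assert (Hp : gE p b x y) by (apply HpE; auto).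
      apply wfp in Hp. destruct Hp; split; apply HVpG; auto. }
    exists [G']. split.
    + constructor; [|constructor].
      exists (repeat p (length (C :: ps'))). split; [simpl; congruence|].
      split; [apply Forall_forall; intros x Hx; apply repeat_spec in Hx; auto|].
      exists (gE p), D, w2, u2, T, T', ((T0, T0') :: prem').
      split; [auto|]. split; [rewrite repeat_length; auto|].
      split; [exact wfG'|]. split; [exact Hdisj|].
      split.
      { intros b x y; simpl. rewrite HpE, HGE, <- HCE0, HcE. tauto. }
      split; [exact HGL|]. split; [|exact Hsat].
      intros i q Ti Ti' a Gi Hq Hpi Hri.
      apply L_nth_repeat in Hq; subst q.
      assert (Hlt : i < length (C :: ps')).
      { simpl length; rewrite Hl2. change (Datatypes.S (length prem')) with (length ((T0, T0') :: prem')). apply nth_error_Some. congruence. }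
      apply nth_error_Some in Hlt.
      destruct (nth_error (C :: ps') i) as [q|] eqn:Hq; [|congruence].
      assert (q = C).
      { apply nth_error_In in Hq. rewrite Forall_forall in Hall. symmetry; apply Hall; auto. }
      subst q.
      destruct (Hprem i C Ti Ti' a Gi Hq Hpi Hri) as [_ [Hd [HCE [HCL [t [Ht Hpt]]]]]].
      split; [exact wfp|]. split; [exact Hd|]. split; [tauto|].
      split; [intros x X; rewrite HL; apply HCL|].
      exists t; split; [exact Ht|].
      revert Hpt; apply L_mono.
      * intros x [X HX]; exists X; apply HL; auto.
      * intros b x y Hb; apply HpE; apply HcE in Hb; tauto.
    + exists G'. split; [reflexivity|]. split; [exact wfG'|]. split; [exact wfG|].
      exists Gam, w, u, A. cbv zeta; simpl.
      split; [exact Hpat|]. split; [exact HA|]. split; [exact He|]. split; [exact HeA|].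
      split.
      { intros b x y; simpl. rewrite HGE, <- HCE0, HcE. tauto. }
      split.
      { intros b x y. rewrite HGE, <- HCE0, HcE. tauto. }
      tauto.
  - intros sigma rho -> [h [Hh ->]] Gs C G ps Hsig Hps Hall Hrho.
    destruct h as [k ha0 s0].
    destruct Hrho as [p [-> [wfp [wfG [Gam [w [u [A Hh']]]]]]]].
    cbv zeta in Hh'; simpl in Hh'.
    destruct Hh' as [Hpat [HA [He [HeA [HpE [HcE HL]]]]]].
    assert (p = C) by (inversion Hall; auto). subst p.
    destruct Hsig as [Gam2 [D [w2 [u2 [T [T' [prem [Hl1 [Hl2 [wfC [Hdisj [HCE [HCL [Hprem Hsat]]]]]]]]]]]]]].
    set (e := match k with Forward => (ha0, w, u) | Backward => (ha0, u, w) end) in *.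
    set (f := fun Gi : gseq U S E =>
      @mkG U S E (fun b x y => Gam b x y \/ In (b, x, y) A) (gL Gi)).
    assert (Hinfo : forall Gi, In Gi Gs -> wf Gi /\ (forall b x y, gE Gi b x y <-> Gam2 b x y)).
    { intros Gi Hin. apply In_nth_error in Hin. destruct Hin as [i Hi].
      assert (Hlt : i < length Gs) by (apply nth_error_Some; congruence).
      assert (Hlt1 : i < length prem) by congruence.
      assert (Hlt2 : i < length (rC (absorb r (grammarH H)))) by congruence.
      apply nth_error_Some in Hlt1. apply nth_error_Some in Hlt2.
      destruct (nth_error prem i) as [[Ti Ti']|] eqn:Hpi; [|congruence].
      destruct (nth_error (rC (absorb r (grammarH H))) i) as [[a Gr]|] eqn:Hri; [|congruence].
      destruct (Hprem i Gi Ti Ti' a Gr Hi Hpi Hri) as [? [_ [? _]]]. auto. }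
    assert (HwfF : forall Gi, wf Gi -> (forall b x y, gE Gi b x y <-> Gam2 b x y) -> wf (f Gi)).
    { intros Gi Hwf HGi. split; [apply Hwf|].
      intros b x y Hb. simpl in Hb. apply (proj2 Hwf b). apply HGi, HCE, HpE. tauto. }
    exists (map f Gs). split.
    + apply L_forall2_map. intros Gi Hin. destruct (Hinfo Gi Hin) as [Hwf HGi].
      exists [Gi]. split; [congruence|]. split; [constructor; auto|].
      exists Gi. split; [reflexivity|]. split; [exact Hwf|]. split; [apply HwfF; auto|].
      exists Gam, w, u, A. cbv zeta; simpl.
      split; [exact Hpat|]. split; [exact HA|]. split; [exact He|]. split; [exact HeA|].
      split.
      { intros b x y. rewrite HGi, <- HCE, HpE. tauto. }
      split; [simpl; tauto|]. tauto.
    + exists (gE G), D, w2, u2, T, T', prem.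
      split; [exact Hl1|]. split; [rewrite length_map; exact Hl2|].
      split; [exact wfG|]. split; [exact Hdisj|]. split; [tauto|].
      split; [intros x X; rewrite <- HL; apply HCL|].
      split; [|exact Hsat].
      intros i q Ti Ti' a Gr Hq Hpi Hri.
      rewrite nth_error_map in Hq.
      destruct (nth_error Gs i) as [Gi|] eqn:HGi; simpl in Hq; inversion Hq; subst q.
      destruct (Hprem i Gi Ti Ti' a Gr HGi Hpi Hri) as [Hwf [Hd [HGiE [HGiL [t [Ht Hpt]]]]]].
      split; [apply HwfF; auto|]. split; [exact Hd|].
      split; [intros b x y; simpl; rewrite HcE; tauto|].
      split; [exact HGiL|].
      unfold absorb in Hri; simpl in Hri. rewrite nth_error_map in Hri.
      apply L_optmap in Hri. destruct Hri as [[a1 G1] [_ Hri]].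
      simpl in Hri. inversion Hri; subst.
      destruct (@L_replace U S E Gi (f Gi) (G1 ++ grammarH H) k ha0 s0 w u A)
        with (t := t) (v := w2) (z := u2) as [t' [Hrt Hp']]; auto.
      * exact (proj2 (HwfF Gi Hwf HGiE)).
      * intros b x y Hb. apply HGiE, HCE, HpE in Hb. simpl. tauto.
      * intros b x y Hb. simpl. tauto.
      * intros x Hx. apply in_or_app; right. unfold grammarH. apply in_flat_map.
        exists {| hk := k; ha := ha0; hs := s0 |}. auto.
      * exists t'. split; [|exact Hp']. unfold lang in *. eapply rt_trans; eauto.
Qed.
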